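(* Let $\approx$ be an equivalence relation on $\mathbb W$. Then $\approx$ satisfies (AP) if and only if it satisfies both (SP) and (DP), where: (AP) for all $A,B\in\mathbb W$: $A\approx B$ iff $A\setminus B\approx B\setminus A$; (SP) for all $A,A',B,B'\in\mathbb W$ with $A\cap B=\emptyset$ and $A'\cap B'=\emptyset$: if $A\approx A'$ and $B\approx B'$ then $A\cup B\approx A'\cup B'$; (DP) for all $A,A',C,C'\in\mathbb W$ with $A\subseteq C$ and $A'\subseteq C'$: if $A\approx A'$ and $C\approx C'$ then $C\setminus A\approx C'\setminus A'$.
   Context: Let $\mathbb N=\{0,1,2,\dots\}$. $\mathbb{W}$ is the family of finitary point sets: sets $A\subseteq\bigcup_{k\ge1}\mathbb N^k$ of finite tuples of natural numbers such that for every $n\in\mathbb N$ there is $h$ with $A\cap\{0,\dots,n\}^k=\emptyset$ for all $k>h$. *)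

(* Defs.v *)
From Stdlib Require Import List Arith.

(* A point set: a set of finite tuples of naturals, tuples encoded as lists. *)
Definition pset := list nat -> Prop.

(* A is finitary (A ∈ 𝕎): A consists of tuples of length k >= 1, and for every n
   there is h such that A ∩ {0,...,n}^k = ∅ for all k > h. *)
Definition finitary (A : pset) : Prop :=
  (forall t, A t -> 1 <= length t) /\
  forall n : nat, exists h : nat, forall t : list nat,
    A t -> h < length t -> ~ (forall x, In x t -> x <= n).

Definition psubset (A B : pset) : Prop := forall t, A t -> B t.
Definition pdisjoint (A B : pset) : Prop := forall t, ~ (A t /\ B t).
Definition pdiff (A B : pset) : pset := fun t => A t /\ ~ B t.
Definition punion (A B : pset) : pset := fun t => A t \/ B t.

(* R is an equivalence relation on 𝕎 (only its restriction to 𝕎 matters). *)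
Definition equiv_on_W (R : pset -> pset -> Prop) : Prop :=
  (forall A, finitary A -> R A A) /\
  (forall A B, finitary A -> finitary B -> R A B -> R B A) /\
  (forall A B C, finitary A -> finitary B -> finitary C ->
     R A B -> R B C -> R A C).

Definition AP (R : pset -> pset -> Prop) : Prop :=
  forall A B, finitary A -> finitary B ->
    (R A B <-> R (pdiff A B) (pdiff B A)).

Definition SP (R : pset -> pset -> Prop) : Prop :=
  forall A A' B B', finitary A -> finitary A' -> finitary B -> finitary B' ->
    pdisjoint A B -> pdisjoint A' B' ->
    R A A' -> R B B' -> R (punion A B) (punion A' B').

Definition DP (R : pset -> pset -> Prop) : Prop :=
  forall A A' C C', finitary A -> finitary A' -> finitary C -> finitary C' ->
    psubset A C -> psubset A' C' ->
    R A A' -> R C C' -> R (pdiff C A) (pdiff C' A').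

(* Main.v *)
Require Import Defs.
From Stdlib Require Import List Arith Lia Classical FunctionalExtensionality PropExtensionality.

Lemma pext (P Q : pset) : (forall t, P t <-> Q t) -> P = Q.
Proof. intro H; apply functional_extensionality; intro t; apply propositional_extensionality; auto. Qed.

Lemma finitary_sub (X Y : pset) : finitary Y -> psubset X Y -> finitary X.
Proof.
  intros [H1 H2] S; split.
  - intros t Xt; apply H1, S, Xt.
  - intro n; destruct (H2 n) as [h Hh]; exists h; intros t Xt; apply Hh, S, Xt.
Qed.

Lemma finitary_union (X Y : pset) : finitary X -> finitary Y -> finitary (punion X Y).
Proof.
  intros [X1 X2] [Y1 Y2]; split.
  - intros t [H|H]; auto.
  - intro n; destruct (X2 n) as [h1 H1]; destruct (Y2 n) as [h2 H2].
    exists (max h1 h2); intros t [H|H] Hl.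
    + apply H1; auto; lia.
    + apply H2; auto; lia.
Qed.

Lemma transfer R (ap : AP R) X Y U V :
  finitary X -> finitary Y -> finitary U -> finitary V ->
  (forall t, pdiff U V t <-> pdiff X Y t) -> (forall t, pdiff V U t <-> pdiff Y X t) ->
  R X Y -> R U V.
Proof.
  intros fX fY fU fV E1 E2 H.
  apply (ap U V fU fV). rewrite (pext _ _ E1), (pext _ _ E2).
  apply (ap X Y fX fY), H.
Qed.

Ltac setsolve atoms :=
  let t := fresh "t" in intro t;
  unfold pdiff, punion, pdisjoint, psubset in *;
  repeat match goal with H : forall _ : list nat, _ |- _ => specialize (H t) end;
  atoms t; cbv beta in *; tauto.

Ltac at4 A B A' B' t := destruct (classic (A t)), (classic (B t)), (classic (A' t)), (classic (B' t)).
Ltac fin F := apply (finitary_sub _ F); [assumption|]; unfold psubset; intro tt;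
        repeat match goal with Z := _ |- _ => subst Z end; unfold punion, pdiff; cbv beta; tauto.

Theorem proposition1p7 (R : pset -> pset -> Prop) :
  equiv_on_W R -> (AP R <-> SP R /\ DP R).
Proof.
  intros [Rrefl [Rsym Rtrans]]; split.
  - intro ap; split.
    + intros A A' B B' fA fA' fB fB' dAB dA'B' HA HB.
      set (F := punion (punion A B) (punion A' B')).
      assert (fF : finitary F) by (apply finitary_union; apply finitary_union; auto).
      set (x := fun t => A t /\ B' t). set (y := fun t => B t /\ A' t).
      set (p := fun t => A t /\ ~ A' t /\ ~ B' t). set (q := fun t => B t /\ ~ A' t /\ ~ B' t).
      set (s := fun t => A' t /\ ~ A t /\ ~ B t). set (u := fun t => B' t /\ ~ A t /\ ~ B t).
      assert (H1 : R (punion (punion x p) q) (punion (punion y s) q)).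
      { apply (transfer R ap A A'); try fin F; auto;
        subst x y p q s; setsolve ltac:(at4 A B A' B'). }
      assert (H2 : R (punion (punion y q) s) (punion (punion x u) s)).
      { apply (transfer R ap B B'); try fin F; auto;
        subst x y p q s u; setsolve ltac:(at4 A B A' B'). }
      assert (H3 : R (punion (punion x p) q) (punion (punion x u) s)).
      { apply (Rtrans _ (punion (punion y q) s)); try fin F.
refine (transfer R ap _ _ _ _ _ _ _ _ _ _ H1); try fin F;
          subst x y p q s u; setsolve ltac:(at4 A B A' B').
        exact H2. }
      refine (transfer R ap _ _ _ _ _ _ _ _ _ _ H3); try fin F;
        subst x y p q s u; setsolve ltac:(at4 A B A' B').
    + intros A A' C C' fA fA' fC fC' sA sA' HA HC.
      set (F := punion (punion A C) (punion A' C')).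
      assert (fF : finitary F) by (apply finitary_union; apply finitary_union; auto).
      set (x := fun t => A t /\ C' t /\ ~ A' t). set (y := fun t => C t /\ ~ A t /\ A' t).
      set (p := fun t => A t /\ ~ C' t). set (q := fun t => C t /\ ~ A t /\ ~ C' t).
      set (s := fun t => A' t /\ ~ C t). set (u := fun t => C' t /\ ~ A' t /\ ~ C t).
      assert (H1 : R (punion (punion x p) q) (punion (punion y s) q)).
      { apply (transfer R ap A A'); try fin F; auto;
        subst x y p q s; setsolve ltac:(at4 A C A' C'). }
      assert (H2 : R (punion (punion p q) x) (punion (punion s u) x)).
      { apply (transfer R ap C C'); try fin F; auto;
        subst x y p q s u; setsolve ltac:(at4 A C A' C'). }
      assert (H3 : R (punion (punion y s) q) (punion (punion s u) x)).
      { apply (Rtrans _ (punion (punion p q) x)); try fin F.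
        - apply Rsym; try fin F.
          refine (transfer R ap _ _ _ _ _ _ _ _ _ _ H1); try fin F;
          subst x y p q s u; setsolve ltac:(at4 A C A' C').
        - exact H2. }
      refine (transfer R ap _ _ _ _ _ _ _ _ _ _ H3); try fin F;
        subst x y p q s u; setsolve ltac:(at4 A C A' C').
  - intros [sp dp] A B fA fB.
    set (I := fun t => A t /\ B t).
    assert (fI : finitary I) by (apply (finitary_sub _ A); auto; intros t [? ?]; auto).
    assert (fAB : finitary (pdiff A B)) by (apply (finitary_sub _ A); auto; intros t [? ?]; auto).
    assert (fBA : finitary (pdiff B A)) by (apply (finitary_sub _ B); auto; intros t [? ?]; auto).
    split.
    + intro H.
      assert (E1 : pdiff A I = pdiff A B) by (apply pext; subst I;
        setsolve ltac:(fun t => destruct (classic (A t)), (classic (B t)))).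
      assert (E2 : pdiff B I = pdiff B A) by (apply pext; subst I;
        setsolve ltac:(fun t => destruct (classic (A t)), (classic (B t)))).
      rewrite <- E1, <- E2.
      apply dp; auto; try (intros t [? ?]; auto).
    + intro H.
      assert (E1 : punion (pdiff A B) I = A) by (apply pext; subst I;
        setsolve ltac:(fun t => destruct (classic (A t)), (classic (B t)))).
      assert (E2 : punion (pdiff B A) I = B) by (apply pext; subst I;
        setsolve ltac:(fun t => destruct (classic (A t)), (classic (B t)))).
      assert (G : R (punion (pdiff A B) I) (punion (pdiff B A) I)).
      2: { rewrite E1, E2 in G; exact G. }
      apply sp; auto; unfold pdisjoint, pdiff; intros t; subst I; cbv beta; tauto.
Qed.
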